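(* Let $\mathcal{A}$ be a finite abelian group and let $\mu$ be the stationary Markov measure on $\mathcal{A}^{\mathbb{Z}}$ with transition matrix $Q=(q^a_b)_{a,b\in\mathcal{A}}$ (where $q^a_b=\Pr[c_1=b\mid c_0=a]$) and stationary probability vector $\nu=(\nu_a)_{a\in\mathcal{A}}$ (with $\nu_a=\Pr[c_0=a]$). If all entries $q^a_b$ are nonzero, then $\mu$ is harmonically mixing.
   Context: Characters of $\mathcal{A}^{\mathbb{Z}}$ are $\chi=\bigotimes_{n\in\mathbb{Z}}\chi_n$ with $\chi_n$ characters of $\mathcal{A}$, all but finitely many trivial; rank$(\chi)$ is the number of nontrivial $\chi_n$. A measure $\mu$ is harmonically mixing if for every $\varepsilon>0$ there is $R$ such that rank$(\chi)>R$ implies $|\int\chi\,d\mu|<\varepsilon$. *)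

(* Defs.v *)
From HB Require Import structures.
From mathcomp Require Import all_boot all_order all_algebra.
From mathcomp Require Import all_classical all_reals all_analysis.
From mathcomp Require Import complex.
Set Implicit Arguments. Unset Strict Implicit. Unset Printing Implicit Defensive.
Import Order.TTheory GRing.Theory Num.Theory.
Local Open Scope classical_set_scope.
Local Open Scope ring_scope.

(* Cylinder generators: the sets {c | c_n = a}.  The product sigma-algebra on
   A^Z is the sigma-algebra they generate. *)
(* alias of A carrying the (inessential) pointed structure needed to build
   a measurable type; the point 0 plays no mathematical role *)
Definition ptA (A : finZmodType) : Type := A.
HB.instance Definition _ (A : finZmodType) := Choice.on (ptA A).
HB.instance Definition _ (A : finZmodType) := isPointed.Build (ptA A) (0%R : A).

Definition coord_sets (A : finZmodType) : set (set (int -> ptA A)) :=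
  [set C | exists (n : int) (a : A), C = [set c | c n = a]].

Notation config A := (g_sigma_algebraType (@coord_sets A)).

Definition is_char (R : rcfType) (A : finZmodType) (chi : A -> R[i]) : Prop :=
  (forall a b : A, chi (a + b) = chi a * chi b) /\ (forall a : A, `|chi a| = 1).

Definition char_trivial (R : rcfType) (A : finZmodType) (chi : A -> R[i]) : Prop :=
  forall a : A, chi a = 1.

(* Evaluation of the character  (x)_{n in Z} chi_n  at c, where s lists (without
   repetition) a finite set of indices outside of which every chi_n is trivial. *)
Definition char_eval (R : rcfType) (A : finZmodType) (chi : int -> A -> R[i])
  (s : seq int) (c : int -> A) : R[i] :=
  \prod_(n <- s) chi n (c n).

Definition cintegral (R : realType) d (T : measurableType d)
  (mu : {measure set T -> \bar R}) (f : T -> R[i]) : R[i] :=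
  (fine (\int[mu]_x (complex.Re (f x))%:E) +i* fine (\int[mu]_x (complex.Im (f x))%:E))%C.

Definition stochastic (R : realType) (A : finType) (q : A -> A -> R) : Prop :=
  (forall a b, 0 <= q a b) /\ (forall a, \sum_(b : A) q a b = 1).

Definition stationary_prob (R : realType) (A : finType) (q : A -> A -> R)
  (nu : A -> R) : Prop :=
  (forall a, 0 <= nu a) /\ \sum_(a : A) nu a = 1 /\
  (forall b, \sum_(a : A) nu a * q a b = nu b).

Definition is_markov_measure (R : realType) (A : finZmodType)
  (q : A -> A -> R) (nu : A -> R) (mu : probability (config A) R) : Prop :=
  forall (m : int) (L : nat) (w : 'I_L.+1 -> A),
    mu [set c : config A | forall i : 'I_L.+1, c (m + (i : nat)%:Z)%R = w i]
    = (nu (w ord0) * \prod_(i < L) q (w (inord i)) (w (inord i.+1)))%:E.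

Definition harmonically_mixing (R : realType) (A : finZmodType)
  (mu : probability (config A) R) : Prop :=
  forall eps : R, 0 < eps -> exists R0 : nat,
    forall (chi : int -> A -> R[i]) (s : seq int),
      uniq s ->
      (forall n, is_char (chi n)) ->
      (forall n, n \notin s -> char_trivial (chi n)) ->
      (R0 < count (fun n => `[< ~ char_trivial (chi n) >]) s)%N ->
      `| cintegral mu (char_eval chi s) | < (eps%:C)%C.

(* Main.v *)
Require Import Defs.
From HB Require Import structures.
From mathcomp Require Import all_boot all_order all_algebra.
From mathcomp Require Import all_classical all_reals all_analysis.
From mathcomp Require Import complex.
From mathcomp Require Import zify.
From mathcomp Require Import ring lra.
Import Order.TTheory GRing.Theory Num.Theory.
Local Open Scope ring_scope.
Set Implicit Arguments. Unset Strict Implicit.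
Local Open Scope complex_scope.
Local Open Scope ring_scope.

Lemma normC_ge0 (R : rcfType) (r : R) : 0 <= r -> `|r%:C| = r%:C.
Proof. by move=> h; rewrite ger0_norm // ler0c. Qed.

Lemma char_sum0 (R : rcfType) (A : finZmodType) (chi : A -> R[i]) :
  is_char chi -> ~ char_trivial chi -> \sum_(b : A) chi b = 0.
Proof.
case=> hM _ hnt.
have [b1 hb1] : exists b1, chi b1 != 1.
  apply: contrapT => h; apply: hnt => a; apply/eqP; apply: contrapT => /negP ha.
  by apply: h; exists a.
have e : chi b1 * \sum_(b : A) chi b = \sum_(b : A) chi b.
  rewrite mulr_sumr; under eq_bigr do rewrite -hM.
  by rewrite [RHS](reindex_inj (addrI b1)).
have : (chi b1 - 1) * \sum_(b : A) chi b = 0 by rewrite mulrBl e mul1r subrr.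
by move/eqP; rewrite mulf_eq0 subr_eq0 (negbTE hb1) => /eqP.
Qed.

Lemma rr (R : rcfType) (A : finZmodType) (q : A -> A -> R) (d : R) a :
 (forall a, \sum_(b : A) q a b = 1) ->
 \sum_(b : A) \sum_(c : A) (q a b * q b c - d^+2) = 1 - (#|A|%:R * d)^+2.
Proof.
move=> hs.
have e b : \sum_(c : A) (q a b * q b c - d^+2) = q a b - d^+2 *+ #|A|.
  by rewrite sumrB -mulr_sumr hs mulr1 sumr_const.
rewrite (eq_bigr _ (fun b _ => e b)) sumrB hs sumr_const.
by rewrite -mulrnA exprMn mulrC -natrX mulr_natr -mulnn.
Qed.

Lemma contract (R : rcfType) (A : finZmodType) (q : A -> A -> R) (d M : R)
  (chi u : A -> R[i]) (a : A) :
  (forall a b, d <= q a b) -> (forall a, \sum_(b : A) q a b = 1) -> 0 <= d ->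
  (forall b, `|chi b| = 1) -> \sum_(b : A) chi b = 0 -> (forall c, `|u c| <= M%:C) ->
  `| \sum_(b : A) (q a b)%:C * (chi b * \sum_(c : A) (q b c)%:C * u c) |
     <= ((1 - (#|A|%:R * d) ^+ 2) * M)%:C.
Proof.
move=> hd hs d0 hchi hS hu.
have qge0 x y : 0 <= q x y by exact: le_trans d0 (hd x y).
have e1 b : (q a b)%:C * (chi b * \sum_(c : A) (q b c)%:C * u c)
   = \sum_(c : A) ((q a b * q b c - d ^+ 2)%:C * (chi b * u c))
     + (d ^+ 2)%:C * chi b * \sum_(c : A) u c.
  rewrite !mulr_sumr -big_split /=; apply: eq_bigr => c _.
  rewrite rmorphB rmorphM /= rmorphXn /=.
  by rewrite -[d%:C ^+ 2 * chi b * u c]mulrA -mulrDl subrK -mulrA [chi b * _]mulrCA.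
rewrite (eq_bigr _ (fun b _ => e1 b)) big_split /= -mulr_suml -mulr_sumr hS mulr0 mul0r addr0.
have r := @rr R A q d a hs.
have hM : 0 <= M.
  have := hu a; rewrite -lecR; exact: le_trans (normr_ge0 _).
apply: (le_trans (ler_norm_sum _ _ _)).
apply: (le_trans (ler_sum _ (fun b _ => ler_norm_sum _ _ _))).
apply: (@le_trans _ _ (\sum_(b : A) \sum_(c : A) ((q a b * q b c - d^+2) * M)%:C)).
  apply: ler_sum => b _; apply: ler_sum => c _.
  have hp : 0 <= q a b * q b c - d ^+ 2.
    by rewrite subr_ge0 expr2 ler_pM.
  rewrite normrM normC_ge0 // normrM hchi mul1r rmorphM /=.
  by apply: ler_wpM2l; rewrite ?ler0c.
rewrite -r mulr_suml rmorph_sum /= le_eqVlt; apply/orP; left; apply/eqP; apply: eq_bigr => b _.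
by rewrite mulr_suml rmorph_sum.
Qed.

Fixpoint G (R : rcfType) (A : finZmodType) (q : A -> A -> R) (k : nat)
  (psi : nat -> A -> R[i]) (a : A) {struct k} : R[i] :=
  match k with
  | 0 => psi 0%N a
  | k'.+1 => psi 0%N a * \sum_(b : A) (q a b)%:C * @G R A q k' (fun i => psi i.+1) b
  end.

Definition nt (R : rcfType) (A : finZmodType) (psi : nat -> A -> R[i]) (i : nat) : bool :=
  `[< ~ char_trivial (psi i) >].

Lemma count_shift (R : rcfType) (A : finZmodType) n m (psi : nat -> A -> R[i]) :
  count (nt psi) (iota m.+1 n) = count (nt (fun i => psi i.+1)) (iota m n).
Proof. by elim: n m => //= n IH m; rewrite IH. Qed.

Lemma avg_bound (R : rcfType) (A : finZmodType) (p : A -> R) (g : A -> R[i]) (M : R) :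
  (forall b, 0 <= p b) -> \sum_(b : A) p b = 1 ->
  (forall b, `|g b| <= M%:C) -> `| \sum_(b : A) (p b)%:C * g b | <= M%:C.
Proof.
move=> q0 hs hg.
apply: (le_trans (ler_norm_sum _ _ _)).
apply: (@le_trans _ _ (\sum_(b : A) (p b * M)%:C)).
  apply: ler_sum => b _; rewrite normrM normC_ge0 // rmorphM /=.
  by apply: ler_wpM2l; rewrite ?ler0c.
by rewrite -rmorph_sum /= -mulr_suml hs mul1r.
Qed.

Lemma G_bound (R : rcfType) (A : finZmodType) (q : A -> A -> R) (d : R) :
  (forall a b, d <= q a b) -> (forall a, \sum_(b : A) q a b = 1) -> 0 <= d ->
  0 <= 1 - (#|A|%:R * d) ^+ 2 ->
  forall k (psi : nat -> A -> R[i]), (forall i, is_char (psi i)) -> forall a,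
  `|G q k psi a| <= ((1 - (#|A|%:R * d) ^+ 2) ^+ (count (nt psi) (iota 1 k.-1))./2)%:C.
Proof.
move=> hd hs d0 hr k.
set rho := 1 - _.
have q0 x y : 0 <= q x y by exact: le_trans d0 (hd x y).
have r1 : rho <= 1 by rewrite /rho lerBlDr lerDl sqr_ge0.
suff : (forall (psi : nat -> A -> R[i]), (forall i, is_char (psi i)) -> forall a,
  `|G q k psi a| <= (rho ^+ (count (nt psi) (iota 1 k.-1))./2)%:C) /\
  (forall (psi : nat -> A -> R[i]), (forall i, is_char (psi i)) -> forall a,
  `|G q k.+1 psi a| <= (rho ^+ (count (nt psi) (iota 1 k))./2)%:C) by case.
elim: k => [|k [IH1 IH2]].
  split=> psi hpsi a /=.
    by rewrite expr0 (proj2 (hpsi 0%N)).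
  rewrite expr0 normrM (proj2 (hpsi 0%N)) mul1r.
  by apply: avg_bound => // b /=; rewrite (proj2 (hpsi 1%N)).
split; first exact: IH2.
move=> psi hpsi a.
rewrite [G _ _ _ _]/= normrM (proj2 (hpsi 0%N)) mul1r.
rewrite [iota 1 k.+1]/= [count _ _]/= count_shift.
case: (boolP (nt psi 1)) => hnt.
  rewrite /=.
  have hc := contract a hd hs d0 (proj2 (hpsi 1%N)) (char_sum0 (hpsi 1%N) (elimT (asboolP _) hnt))
     (IH1 (fun i => psi i.+2) (fun i => hpsi i.+2)).
  apply: le_trans hc _.
  rewrite lecR -/rho -exprS; apply: ler_wiXn2l => //.
  case: k {IH1 IH2} => [|k] //=.
  rewrite count_shift.
  rewrite add0n uphalfE; set c := count _ (iota 1 k).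
  apply: (@leq_trans (c.+2)./2) => //; apply: half_leq.
  by rewrite ltnS -[X in (_ <= X)%N]add1n leq_add2r; case: nt.
rewrite add0n.
by apply: avg_bound => // b; apply: (IH2 (fun i => psi i.+1) (fun i => hpsi i.+1)).
Qed.

Definition consw (A : finType) n (a : A) (w : {ffun 'I_n -> A}) : {ffun 'I_n.+1 -> A} :=
  [ffun i : 'I_n.+1 => match unlift ord0 i with Some j => w j | None => a end].

Lemma consw0 (A : finType) n (a : A) (w : {ffun 'I_n -> A}) : consw a w ord0 = a.
Proof. by rewrite ffunE unlift_none. Qed.

Lemma conswS (A : finType) n (a : A) (w : {ffun 'I_n -> A}) j : consw a w (lift ord0 j) = w j.
Proof. by rewrite ffunE liftK. Qed.

Lemma split_sum (A : finType) (V : nmodType) n (F : {ffun 'I_n.+1 -> A} -> V) :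
  \sum_(w : {ffun 'I_n.+1 -> A}) F w = \sum_(a : A) \sum_(w : {ffun 'I_n -> A}) F (consw a w).
Proof.
rewrite pair_big /=.
pose h (p : A * {ffun 'I_n -> A}) := consw p.1 p.2.
pose g (w : {ffun 'I_n.+1 -> A}) := (w ord0, [ffun j => w (lift ord0 j)]).
have K1 : cancel h g.
  case=> a w; rewrite /g /h /= consw0; congr (_, _); apply/ffunP => j.
  by rewrite ffunE conswS.
have K2 : cancel g h.
  move=> w; apply/ffunP => i; rewrite /h /g /= ffunE.
  by case: unliftP => [j -> | ->]; rewrite ?ffunE.
by rewrite (reindex h (onW_bij _ (Bijective K1 K2))).
Qed.

Lemma inord_lift n m : (m < n.+1)%N -> (inord m.+1 : 'I_n.+2) = lift ord0 (inord m : 'I_n.+1).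
Proof. by move=> h; apply: val_inj; rewrite /= /bump /= inordK // inordK. Qed.

Lemma word_sum (R : rcfType) (A : finZmodType) (q : A -> A -> R) k :
  forall (f : A -> R[i]) (psi : nat -> A -> R[i]),
  \sum_(w : {ffun 'I_k.+1 -> A}) f (w ord0) *
     ((\prod_(i < k) q (w (inord i)) (w (inord i.+1)))%:C * \prod_(j < k.+1) psi j (w j))
  = \sum_(a : A) f a * G q k psi a.
Proof.
elim: k => [|k IH] f psi.
  rewrite split_sum; apply: eq_bigr => a _.
  under eq_bigr do rewrite consw0 big_ord0 big_ord1 /= consw0 rmorph1 mul1r.
  by rewrite sumr_const card_ffun card_ord expn0 mulr1n.
rewrite split_sum.
transitivity (\sum_(a : A) \sum_(w : {ffun 'I_k.+1 -> A}) (f a * psi 0%N a * (q a (w ord0))%:C) *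
   ((\prod_(i < k) q (w (inord i)) (w (inord i.+1)))%:C * \prod_(j < k.+1) psi j.+1 (w j))).
  apply: eq_bigr => a _; apply: eq_bigr => w _.
  rewrite consw0 big_ord_recl.
  rewrite [X in _ * (_ * X)]big_ord_recl consw0.
  have e0 : (inord 0 : 'I_k.+2) = ord0 by apply: val_inj; rewrite /= inordK.
  have e0' : (inord 0 : 'I_k.+1) = ord0 by apply: val_inj; rewrite /= inordK.
  rewrite e0 consw0 (@inord_lift k 0) // conswS e0'.
  have Pq : \prod_(i < k) q (consw a w (inord (lift ord0 i))) (consw a w (inord (lift ord0 i).+1))
     = \prod_(i < k) q (w (inord i)) (w (inord i.+1)).
    apply: eq_bigr => i _.
    have h1 : (i < k.+1)%N by exact: ltnW (ltn_ord i).
    have h2 : (i.+1 < k.+1)%N by exact: ltn_ord i.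
    have -> : ((lift ord0 i) : nat) = i.+1 by rewrite /= /bump add1n.
    by rewrite (inord_lift h1) (inord_lift h2) !conswS.
  have Pp : \prod_(i < k.+1) psi (lift ord0 i) (consw a w (lift ord0 i)) = \prod_(j < k.+1) psi j.+1 (w j).
    by apply: eq_bigr => j _; rewrite conswS.
  rewrite Pq Pp rmorphM /= -!mulrA; congr (_ * _); rewrite [RHS]mulrCA; congr (_ * _).
  exact: mulrCA.
rewrite exchange_big /=.
under eq_bigr do rewrite -mulr_suml.
etransitivity; first exact: (IH (fun b => \sum_(a : A) f a * psi 0%N a * (q a b)%:C) (fun i => psi i.+1)).
rewrite /=.
under eq_bigr do rewrite mulr_suml.
rewrite exchange_big /=; apply: eq_bigr => a _.
rewrite !mulr_sumr; apply: eq_bigr => b _; by rewrite !mulrA.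
Qed.

Local Open Scope classical_set_scope.
Local Open Scope ring_scope.

Lemma cyl_meas (A : finZmodType) (m : int) (L : nat) (w : 'I_L.+1 -> A) :
  measurable [set c : config A | forall i : 'I_L.+1, c (m + (i : nat)%:Z)%R = w i].
Proof.
have -> : [set c : config A | forall i : 'I_L.+1, c (m + (i : nat)%:Z)%R = w i] =
  \bigcap_(i in [set: 'I_L.+1]) [set c : config A | c (m + (i : nat)%:Z)%R = w i].
  by apply/seteqP; split => c /= h i; [move=> _; exact: h | exact: h i I].
apply: fin_bigcap_measurable; first exact: finite_finset.
move=> i _; apply: sub_sigma_algebra; by exists (m + (i : nat)%:Z)%R, (w i).
Qed.

Lemma int_lin (R : realType) (A : finZmodType) (mu : probability (config A) R)
  (I : finType) (S : I -> set (config A)) (r p : I -> R) :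
  (forall i, measurable (S i)) -> (forall i, mu (S i) = (p i)%:E) ->
  (\int[mu]_x (\sum_(i : I) \1_(S i) x * r i)%:E)%E = (\sum_(i : I) r i * p i)%:E.
Proof.
move=> mS hS.
rewrite (_ : (fun x => (\sum_(i : I) \1_(S i) x * r i)%:E) =
    (fun x => \sum_(i : I) ((r i)%:E * (\1_(S i) x)%:E)%E)); last first.
  by apply/funext => x; rewrite -sumEFin; apply: eq_bigr => i _; rewrite mulrC.
rewrite integral_sum //; last first.
  by move=> i; apply: integrableZl => //; exact: integrable_indic.
rewrite -sumEFin; apply: eq_bigr => i _.
rewrite integralZl //; last exact: integrable_indic.
rewrite integral_indic // setIT EFinM; congr (_ * _)%E; exact: hS.
Qed.

Definition cyl (A : finZmodType) (m : int) L (w : 'I_L.+1 -> A) : set (config A) :=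
  [set c : config A | forall i : 'I_L.+1, c (m + (i : nat)%:Z)%R = w i].

Local Open Scope complex_scope.
Local Open Scope ring_scope.

Lemma prod_expand (R : rcfType) (A : finZmodType) (L : nat) (m : int)
  (psi : nat -> A -> R[i]) (c : config A) :
  \prod_(j < L.+1) psi j (c (m + (j : nat)%:Z)) =
  \sum_(w : {ffun 'I_L.+1 -> A}) ((\1_(cyl m w) c : R)%:C) * \prod_(j < L.+1) psi j (w j).
Proof.
have e (j : 'I_L.+1) : psi j (c (m + (j : nat)%:Z)) =
    \sum_(a : A) ((c (m + (j : nat)%:Z) == a)%:R) * psi j a.
  rewrite (bigD1 (c (m + (j : nat)%:Z))) //= eqxx mul1r big1 ?addr0 // => a ha.
  by rewrite eq_sym (negbTE ha) mul0r.
rewrite (eq_bigr _ (fun j _ => e j)) bigA_distr_bigA /=.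
apply: eq_bigr => w _; rewrite big_split /=; congr (_ * _).
rewrite indicE rmorph_nat.
case: (boolP (c \in cyl m w)) => h.
  have H := set_mem h.
  by rewrite big1 // => j _; rewrite H eqxx.
have [j hj] : exists j : 'I_L.+1, c (m + (j : nat)%:Z) != w j.
  apply: contrapT => H; move/negP: h; apply; apply/mem_set => j.
  by apply/eqP; apply: contrapT => hj; apply: H; exists j; apply/negP.
by rewrite (bigD1 j) //= (negbTE hj) mul0r.
Qed.

Lemma Re_sum (R : rcfType) (I : finType) (f : I -> R[i]) :
  complex.Re (\sum_(i : I) f i) = \sum_(i : I) complex.Re (f i).
Proof.
apply: (big_rec2 (fun y x => complex.Re y = x)) => //= i y x _ <-.
by case: (f i); case: y.
Qed.

Lemma Im_sum (R : rcfType) (I : finType) (f : I -> R[i]) :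
  complex.Im (\sum_(i : I) f i) = \sum_(i : I) complex.Im (f i).
Proof.
apply: (big_rec2 (fun y x => complex.Im y = x)) => //= i y x _ <-.
by case: (f i); case: y.
Qed.

Lemma ReM (R : rcfType) (r : R) (z : R[i]) : complex.Re (r%:C * z) = r * complex.Re z.
Proof. by case: z => a b /=; rewrite mul0r subr0. Qed.

Lemma ImM (R : rcfType) (r : R) (z : R[i]) : complex.Im (r%:C * z) = r * complex.Im z.
Proof. by case: z => a b /=; rewrite mul0r addr0. Qed.

Lemma cint_lin (R : realType) (A : finZmodType) (mu : probability (config A) R) (L : nat) (m : int)
  (V : {ffun 'I_L.+1 -> A} -> R[i]) (p : {ffun 'I_L.+1 -> A} -> R) (F : config A -> R[i]) :
  (forall x, F x = \sum_(w : {ffun 'I_L.+1 -> A}) ((\1_(cyl m w) x : R)%:C) * V w) ->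
  (forall w : {ffun 'I_L.+1 -> A}, mu (cyl m w) = (p w)%:E) ->
  cintegral mu F = \sum_(w : {ffun 'I_L.+1 -> A}) (p w)%:C * V w.
Proof.
move=> hF hp; rewrite /cintegral.
have hRe : (fun x => (complex.Re (F x))%:E) =
    (fun x => (\sum_(w : {ffun 'I_L.+1 -> A}) \1_(cyl m w) x * complex.Re (V w))%:E).
  by apply/funext => x; rewrite hF Re_sum; congr (_%:E); apply: eq_bigr => w _; rewrite ReM.
have hIm : (fun x => (complex.Im (F x))%:E) =
    (fun x => (\sum_(w : {ffun 'I_L.+1 -> A}) \1_(cyl m w) x * complex.Im (V w))%:E).
  by apply/funext => x; rewrite hF Im_sum; congr (_%:E); apply: eq_bigr => w _; rewrite ImM.
rewrite hRe hIm !(int_lin _ (fun w : {ffun 'I_L.+1 -> A} => cyl_meas m w) hp) /=.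
set z := \sum_(w : {ffun 'I_L.+1 -> A}) (p w)%:C * V w.
have zRe : complex.Re z = \sum_(w : {ffun 'I_L.+1 -> A}) complex.Re (V w) * p w.
  by rewrite /z Re_sum; apply: eq_bigr => w _; rewrite ReM mulrC.
have zIm : complex.Im z = \sum_(w : {ffun 'I_L.+1 -> A}) complex.Im (V w) * p w.
  by rewrite /z Im_sum; apply: eq_bigr => w _; rewrite ImM mulrC.
by rewrite -zRe -zIm; case: z {zRe zIm}.
Qed.

Lemma char_eval_window (R : rcfType) (A : finZmodType) (chi : int -> A -> R[i]) (s : seq int)
  (m : int) (L : nat) (c : int -> A) :
  uniq s -> (forall n, n \notin s -> char_trivial (chi n)) ->
  (forall n, n \in s -> exists2 j : nat, (j < L.+1)%N & n = m + j%:Z) ->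
  char_eval chi s c = \prod_(j < L.+1) chi (m + (j : nat)%:Z) (c (m + (j : nat)%:Z)).
Proof.
move=> us htriv hin.
pose W := map (fun j : nat => m + j%:Z) (iota 0 L.+1).
have -> : \prod_(j < L.+1) chi (m + (j : nat)%:Z) (c (m + (j : nat)%:Z)) = \prod_(n <- W) chi n (c n).
  by rewrite big_map -(big_mkord xpredT (fun j : nat => chi (m + j%:Z) (c (m + j%:Z)))) /index_iota subn0.
have uW : uniq W by rewrite map_inj_uniq ?iota_uniq // => i j /addrI; case.
rewrite -(big_rmcond (fun n => n \in s)); last by move=> n /htriv h; apply: h.
rewrite -big_filter /char_eval.
apply: perm_big; apply: uniq_perm => //; first exact: filter_uniq.
move=> n; rewrite mem_filter andb_idr // => /hin [j hj ->].
by apply/mapP; exists j => //; rewrite mem_iota.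
Qed.

Lemma count_window (R : rcfType) (A : finZmodType) (chi : int -> A -> R[i]) (s : seq int)
  (m : int) (L : nat) :
  uniq s -> (forall n, n \in s -> exists2 j : nat, (0 < j < L)%N & n = m + j%:Z) ->
  (count (fun n => `[< ~ char_trivial (chi n) >]) s <=
     count (nt (fun j : nat => chi (m + j%:Z)%R)) (iota 1 L.-1))%N.
Proof.
move=> us hin.
rewrite -!size_filter -(size_map (fun j : nat => m + j%:Z)).
apply: uniq_leq_size; first exact: filter_uniq.
move=> n; rewrite mem_filter => /andP [hn ns].
have [j /andP [j0 jL] hnj] := hin n ns; subst n.
apply/mapP; exists j => //; rewrite mem_filter; apply/andP; split.
  exact: hn.
rewrite mem_iota; apply/andP; split => //.
by rewrite add1n prednK // (leq_trans j0 (ltnW jL)).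
Qed.


Lemma geom_small (R : realType) (t eps : R) : 0 < t -> t <= 1 -> 0 < eps ->
  exists K : nat, (1 - t) ^+ K < eps.
Proof.
move=> t0 t1 e0.
have bern n : (1 - t) ^+ n * (1 + n%:R * t) <= 1.
  elim: n => [|n IH]; first by rewrite expr0 mul0r addr0 mulr1.
  rewrite exprSr -mulrA; apply: le_trans IH; apply: ler_wpM2l.
    by rewrite exprn_ge0 // subr_ge0.
  have hn : 0 <= n%:R :> R by rewrite ler0n.
  rewrite -natr1. nra.
pose K := (Num.Def.trunc (eps^-1 / t)).+1.
have hK : eps^-1 / t < K%:R by exact: truncnS_gt.
exists K.
have pos : 0 < 1 + K%:R * t.
  have hk : 0 <= K%:R :> R by rewrite ler0n.
  have := mulr_ge0 hk (ltW t0); lra.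
rewrite -(ltr_pM2r pos); apply: le_lt_trans (bern K) _.
have h1 : eps^-1 < K%:R * t by rewrite -ltr_pdivrMr.
have h2 : 1 < eps * (K%:R * t).
  by rewrite -(ltr_pM2l e0) (mulfV (lt0r_neq0 e0)) in h1.
apply: lt_le_trans h2 _; rewrite ler_pM2l // lerDr; exact: ler01.
Qed.

Unset Implicit Arguments.

Theorem mainTheorem6 (R : realType) (A : finZmodType)
  (q : A -> A -> R) (nu : A -> R) (mu : probability (config A) R) :
  stochastic q -> stationary_prob q nu -> is_markov_measure q nu mu ->
  (forall a b : A, q a b != 0) ->
  harmonically_mixing mu.
Proof.
move=> [q0 hs] [nu0 [nus _]] hmk hq eps eps0.
pose d := \big[Order.min/1]_(p : A * A) q p.1 p.2.
have hd a b : d <= q a b by exact: (bigmin_le 1 (a, b) (fun p : A * A => q p.1 p.2)).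
have d0 : 0 < d.
  apply: lt_bigmin => [|p _]; first exact: ltr01.
  by rewrite lt_def hq q0.
have cA : (0 < #|A|)%N by apply/card_gt0P; exists 0.
have Nd1 : #|A|%:R * d <= 1.
  apply: (@le_trans _ _ (\sum_(b : A) d)).
    by rewrite sumr_const mulr_natl; exact: lexx.
  by rewrite -(hs 0); apply: ler_sum => b _; exact: hd.
have Nd0 : 0 < #|A|%:R * d by rewrite mulr_gt0 // ltr0n.
have t0 : 0 < (#|A|%:R * d) ^+ 2 by rewrite exprn_gt0.
have t1 : (#|A|%:R * d) ^+ 2 <= 1 by rewrite expr_le1 // ltW.
have [K hK] := geom_small t0 t1 eps0.
exists K.*2.
move=> chi s us hchi htriv hcnt.
pose B := (\sum_(n <- s) `|n|)%N.
pose m : int := - (B.+1)%:Z.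
pose L := (B.+1).*2.
pose psi := fun j : nat => chi (m + j%:Z).
have hB n : n \in s -> (`|n| <= B)%N.
  by move=> ns; rewrite /B (big_rem n) //= leq_addr.
have hwin n : n \in s -> exists2 j : nat, (0 < j < L)%N & n = m + j%:Z.
  move=> ns; have := hB n ns; rewrite /L /m => hb.
  exists (absz (n + (B.+1)%:Z)%R); first by apply/andP; split; lia.
  lia.
have hwin' n : n \in s -> exists2 j : nat, (j < L.+1)%N & n = m + j%:Z.
  by move=> /hwin [j /andP [_ jL] ->]; exists j => //; apply: ltnW.
have Fe (x : config A) : char_eval chi s x =
    \sum_(w : {ffun 'I_L.+1 -> A}) ((\1_(cyl m w) x : R)%:C) * \prod_(j < L.+1) psi j (w j).
  by rewrite (char_eval_window _ us htriv hwin') (@prod_expand _ _ L m psi x).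
have hp (w : {ffun 'I_L.+1 -> A}) : mu (cyl m w) =
    (nu (w ord0) * \prod_(i < L) q (w (inord i)) (w (inord i.+1)))%:E := hmk m L w.
rewrite (cint_lin Fe hp).
have -> : \sum_(w : {ffun 'I_L.+1 -> A})
    (nu (w ord0) * \prod_(i < L) q (w (inord i)) (w (inord i.+1)))%:C * \prod_(j < L.+1) psi j (w j)
    = \sum_(a : A) (nu a)%:C * G q L psi a.
  by rewrite -word_sum; apply: eq_bigr => w _; rewrite rmorphM -mulrA.
have hr : 0 <= 1 - (#|A|%:R * d) ^+ 2 by rewrite subr_ge0.
have hpsi : forall i, is_char (psi i) by move=> i; exact: hchi.
apply: le_lt_trans (avg_bound nu0 nus (G_bound hd hs (ltW d0) hr L hpsi)) _.
rewrite ltcR; apply: le_lt_trans hK.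
apply: ler_wiXn2l => //; first by rewrite lerBlDr lerDl sqr_ge0.
rewrite geq_half_double; apply: ltnW; apply: (leq_trans hcnt).
exact: count_window us hwin.
Qed.
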